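(* Let $(D,\mathrm{left},\mathrm{right})$ be an interval domain and $x\in D$ with $\Uparrow x\neq\emptyset$ in $D$. Then for every $\le$-filtered set $S\subseteq\max(D)$ that has an infimum $\bigwedge S$ in $(\max(D),\le)$: if $\bigwedge S\le\mathrm{left}(x)$, then there exists $s\in S$ with $s\le\mathrm{right}(x)$.
   Context: For a poset $(P,\sqsubseteq)$: directed (resp. filtered) sets are nonempty sets in which any two elements have an upper (resp. lower) bound in the set; $\bigsqcup S$ is the supremum; $x\ll y$ iff for every directed $S\subseteq P$ with a supremum, $y\sqsubseteq\bigsqcup S$ implies $x\sqsubseteq s$ for some $s\in S$; $\Uparrow x=\{a: x\ll a\}$, $\Downarrow x=\{a:a\ll x\}$. $P$ is continuous if there is $B\subseteq P$ such that for each $x$, $B\cap\Downarrow x$ contains a directed set with supremum $x$; a continuous dcpo is a continuous poset in which every directed set has a supremum. $\max(P)$ is the set of maximal elements, $x\sqcap y$ the infimum of $\{x,y\}$. The Scott topology consists of upper sets $U$ such that $\bigsqcup S\in U$ implies $S\cap U\ne\emptyset$ for directed $S$. An interval poset is a poset $D$ with functions $\mathrm{left},\mathrm{right}:D\to\max(D)$ such that (only named infima are assumed to exist): (i) $x=\mathrm{left}(x)\sqcap\mathrm{right}(x)$ for all $x$; (ii) if $\mathrm{right}(x)=\mathrm{left}(y)$ then $\mathrm{left}(x\sqcap y)=\mathrm{left}(x)$ and $\mathrm{right}(x\sqcap y)=\mathrm{right}(y)$; (iii) for $p\in\max(D)$ with $x\sqsubseteq p$: $\mathrm{left}(\mathrm{left}(x)\sqcap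 p)=\mathrm{left}(x)$, $\mathrm{right}(\mathrm{left}(x)\sqcap p)=p$, $\mathrm{left}(p\sqcap\mathrm{right}(x))=p$, $\mathrm{right}(p\sqcap\mathrm{right}(x))=\mathrm{right}(x)$. On $\max(D)$ define $a\le b$ iff $a=\mathrm{left}(z)$, $b=\mathrm{right}(z)$ for some $z\in D$; this is a partial order. For $p,q\in\max(D)$ let $[p,\cdot]=\mathrm{left}^{-1}(p)$ and $[\cdot,q]=\mathrm{right}^{-1}(q)$, regarded as subposets of $D$. An interval domain is an interval poset $(D,\mathrm{left},\mathrm{right})$ such that $D$ is a continuous dcpo and: (i) if $p\in\Uparrow x\cap\max(D)$ then $\Uparrow(\mathrm{left}(x)\sqcap p)\ne\emptyset$ and $\Uparrow(p\sqcap\mathrm{right}(x))\ne\emptyset$; (ii) for all $x\in D$ the following are equivalent: (a) $\Uparrow x\ne\emptyset$; (b) for all $y\in[\mathrm{left}(x),\cdot]$ with $y\sqsubseteq x$, $y\ll\mathrm{right}(y)$ in the poset $[\cdot,\mathrm{right}(y)]$; (c) for all $y\in[\cdot,\mathrm{right}(x)]$ with $y\sqsubseteq x$, $y\ll\mathrm{left}(y)$ in the poset $[\mathrm{left}(y),\cdot]$; (iii)(a) for every directed $S\subseteq[p,\cdot]$, $\mathrm{left}(\bigsqcup S)=p$ and $\mathrm{right}(\bigsqcup S)=\mathrm{right}(\bigsqcup T)$ for every directed $T\subseteq[q,\cdot]$ with $\mathrm{right}(T)=\mathrm{right}(S)$ (images); (iii)(b) for every directed $S\subseteq[\cdot,q]$,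 $\mathrm{right}(\bigsqcup S)=q$ and $\mathrm{left}(\bigsqcup S)=\mathrm{left}(\bigsqcup T)$ for every directed $T\subseteq[\cdot,p]$ with $\mathrm{left}(T)=\mathrm{left}(S)$; (iv) for all $x\in D$, $\{y\in\max(D): x\sqsubseteq y\}$ is compact in the relative Scott topology. *)

(* Defs.v *)
From Stdlib Require Import List.
Set Implicit Arguments.

Section Order.
Variable D : Type.
Variable le : D -> D -> Prop.

Definition is_partial_order : Prop :=
  (forall x, le x x) /\
  (forall x y, le x y -> le y x -> x = y) /\
  (forall x y z, le x y -> le y z -> le x z).

Definition subset (A B : D -> Prop) : Prop := forall a, A a -> B a.

Definition is_max (p : D) : Prop := forall y, le p y -> y = p.

Definition directed (S : D -> Prop) : Prop :=
  (exists s, S s) /\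
  forall a b, S a -> S b -> exists c, S c /\ le a c /\ le b c.

Definition filtered (S : D -> Prop) : Prop :=
  (exists s, S s) /\
  forall a b, S a -> S b -> exists c, S c /\ le c a /\ le c b.

(* suprema / infima relative to a subposet P (use P := fun _ => True for D) *)
Definition is_lub_in (P S : D -> Prop) (s : D) : Prop :=
  P s /\ (forall a, S a -> le a s) /\
  (forall u, P u -> (forall a, S a -> le a u) -> le s u).

Definition is_glb_in (P S : D -> Prop) (s : D) : Prop :=
  P s /\ (forall a, S a -> le s a) /\
  (forall u, P u -> (forall a, S a -> le u a) -> le u s).

Definition allD : D -> Prop := fun _ => True.

Definition is_lub (S : D -> Prop) (s : D) : Prop := is_lub_in allD S s.

Definition is_meet (x y z : D) : Prop :=
  is_glb_in allD (fun a => a = x \/ a = y) z.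

Definition way_below_in (P : D -> Prop) (x y : D) : Prop :=
  forall S s, subset S P -> directed S -> is_lub_in P S s -> le y s ->
    exists a, S a /\ le x a.

Definition way_below (x y : D) : Prop := way_below_in allD x y.

Definition uparrow_nonempty (x : D) : Prop := exists a, way_below x a.

Definition continuous_poset : Prop :=
  exists B : D -> Prop, forall x, exists S : D -> Prop,
    subset S (fun a => B a /\ way_below a x) /\ directed S /\ is_lub S x.

Definition dcpo : Prop := forall S, directed S -> exists s, is_lub S s.

Definition continuous_dcpo : Prop := is_partial_order /\ continuous_poset /\ dcpo.

Definition upper_set (U : D -> Prop) : Prop := forall a b, U a -> le a b -> U b.

Definition scott_open (U : D -> Prop) : Prop :=
  upper_set U /\
  forall S s, directed S -> is_lub S s -> U s -> exists a, S a /\ U a.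

Definition scott_compact (K : D -> Prop) : Prop :=
  forall F : (D -> Prop) -> Prop,
    (forall U, F U -> scott_open U) ->
    (forall k, K k -> exists U, F U /\ U k) ->
    exists l : list (D -> Prop),
      (forall U, In U l -> F U) /\
      (forall k, K k -> exists U, In U l /\ U k).

End Order.

Section Interval.
Variable D : Type.
Variable le : D -> D -> Prop.
Variables left right : D -> D.

Definition interval_poset : Prop :=
  is_partial_order le /\
  (forall x, is_max le (left x) /\ is_max le (right x)) /\
  (forall x, is_meet le (left x) (right x) x) /\
  (forall x y, right x = left y ->
     exists z, is_meet le x y z /\ left z = left x /\ right z = right y) /\
  (forall x p, is_max le p -> le x p ->
     (exists z, is_meet le (left x) p z /\ left z = left x /\ right z = p) /\
     (exists z, is_meet le p (right x) z /\ left z = p /\ right z = right x)).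

(* the order ≤ on max(D) *)
Definition maxle (a b : D) : Prop := exists z, left z = a /\ right z = b.

(* [p,·] and [·,q] *)
Definition lsec (p : D) : D -> Prop := fun y => left y = p.
Definition rsec (q : D) : D -> Prop := fun y => right y = q.

Definition interval_domain : Prop :=
  interval_poset /\
  continuous_dcpo le /\
  (forall x p, is_max le p -> way_below le x p ->
     (forall z, is_meet le (left x) p z -> uparrow_nonempty le z) /\
     (forall z, is_meet le p (right x) z -> uparrow_nonempty le z)) /\
  (forall x,
     (uparrow_nonempty le x <->
        (forall y, lsec (left x) y -> le y x ->
           way_below_in le (rsec (right y)) y (right y))) /\
     (uparrow_nonempty le x <->
        (forall y, rsec (right x) y -> le y x ->
           way_below_in le (lsec (left y)) y (left y)))) /\
  (forall p S s, directed le S -> subset S (lsec p) -> is_lub le S s ->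
     left s = p /\
     (forall q T t, directed le T -> subset T (lsec q) ->
        (forall r, (exists a, T a /\ right a = r) <-> (exists a, S a /\ right a = r)) ->
        is_lub le T t -> right s = right t)) /\
  (forall q S s, directed le S -> subset S (rsec q) -> is_lub le S s ->
     right s = q /\
     (forall p T t, directed le T -> subset T (rsec p) ->
        (forall r, (exists a, T a /\ left a = r) <-> (exists a, S a /\ left a = r)) ->
        is_lub le T t -> left s = left t)) /\
  (forall x, scott_compact le (fun y => is_max le y /\ le x y)).

End Interval.

(* Main.v *)
Require Import Defs.

Theorem mainTheorem11 (D : Type) (le : D -> D -> Prop) (left right : D -> D)
  (HD : interval_domain le left right) (x : D) (Hx : uparrow_nonempty le x)
  (S : D -> Prop) (m : D) :
  subset S (is_max le) ->
  filtered (maxle left right) S ->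
  is_glb_in (maxle left right) (is_max le) S m ->
  maxle left right m (left x) ->
  exists s, S s /\ maxle left right s (right x).
Proof.
  intros HSmax HF Hglb Hma.
  destruct HD as [IP [CD [Hi [Hii [Hiiia [Hiiib Hiv]]]]]].
  destruct IP as [PO [Hmax [Hmeet [Hjoin Hiii]]]].
  destruct PO as [Refl [Anti Trans]].
  assert (F1a : forall z, le z (left z)).
  { intro z. destruct (Hmeet z) as [_ [H _]]. apply H; auto. }
  assert (F1b : forall z, le z (right z)).
  { intro z. destruct (Hmeet z) as [_ [H _]]. apply H; auto. }
  assert (F1c : forall z u, le u (left z) -> le u (right z) -> le u z).
  { intros z u H1 H2. destruct (Hmeet z) as [_ [_ H]]. apply H. exact I.
    intros q [->| ->]; auto. }
  assert (R : forall y p, is_max le p -> le y p -> maxle left right p (right y)).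
  { intros y p Hp Hyp. destruct (Hiii y p Hp Hyp) as [_ [z [_ [Hl Hr]]]].
    exists z; auto. }
  assert (L : forall w v z, right w = left v -> left z = left w -> right z = right v ->
            le z (right w)).
  { intros w v z Hwv Hl Hr. destruct (Hjoin w v Hwv) as [z' [[_ [Hz'1 Hz'2]] [Hl' Hr']]].
    assert (le z z').
    { apply F1c. rewrite Hl'. rewrite <- Hl. apply F1a.
      rewrite Hr'. rewrite <- Hr. apply F1b. }
    apply Trans with z'; auto. apply Trans with w; auto. }
  assert (A : forall a b, is_max le a -> maxle left right a b -> maxle left right b a -> a = b).
  { intros a b Ha [z1 [H1l H1r]] [z2 [H2l H2r]].
    assert (Hab : le a b).
    { assert (E : right z1 = left z2) by congruence.
      destruct (Hjoin z1 z2 E) as [z [[_ [Hz1 Hz2]] [Hl Hr]]].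
      apply Trans with z.
      - apply F1c. rewrite Hl, H1l. apply Refl. rewrite Hr, H2r. apply Refl.
      - apply Trans with z1. apply Hz1; auto. rewrite <- H1r. apply F1b. }
    symmetry. apply Ha. exact Hab. }

  destruct Hma as [w1 [Hw1l Hw1r]].
  assert (E1 : right w1 = left x) by exact Hw1r.
  destruct (Hjoin w1 x E1) as [y [[_ [Hy1 Hy2]] [Hyl Hyr]]].
  assert (Hyx : le y x).
  { apply F1c. apply Trans with w1. apply Hy1; auto. rewrite <- Hw1r. apply F1b.
    apply Trans with (right y). apply F1b. rewrite Hyr. apply Refl. }
  destruct (Hii x) as [_ [Hc _]].
  assert (WB := Hc Hx y Hyr Hyx).
  rewrite Hyl, Hw1l in WB.
  destruct Hglb as [Hmmax [Hmlb Hmgr]].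
  set (T := fun z => exists s, S s /\ left z = m /\ right z = s).
  assert (Hlm : left m = m).
  { apply Hmmax. apply F1a. }
  destruct (WB T m) as [z [[s [Hs [Hzl Hzr]]] Hyz]].
  - intros z [s [_ [Hl _]]]. exact Hl.
  - split.
    + destruct HF as [[s0 Hs0] _]. destruct (Hmlb s0 Hs0) as [z [Hl Hr]].
      exists z. exists s0. auto.
    + intros z1 z2 [s1 [Hs1 [Hl1 Hr1]]] [s2 [Hs2 [Hl2 Hr2]]].
      destruct HF as [_ HF]. destruct (HF s1 s2 Hs1 Hs2) as [c [Hc' [[v1 [Hv1l Hv1r]] [v2 [Hv2l Hv2r]]]]].
      destruct (Hmlb c Hc') as [w [Hwl Hwr]].
      exists w. split. exists c. auto.
      split.
      * apply F1c. rewrite Hwl, <- Hl1. apply F1a.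
        apply L with v1; congruence.
      * apply F1c. rewrite Hwl, <- Hl2. apply F1a.
        apply L with v2; congruence.
  - split; [exact Hlm|split].
    + intros z [s [_ [Hl _]]]. rewrite <- Hl. apply F1a.
    + intros u Hu Hub. unfold lsec in Hu.
      assert (Hr : right u = m).
      { symmetry. apply A. exact Hmmax. exists u. auto.
        apply Hmgr. apply (Hmax u).
        intros s Hs. destruct (Hmlb s Hs) as [z [Hl Hr]].
        rewrite <- Hr. apply R. apply (Hmax u).
        apply Trans with u. apply Hub. exists s. auto. apply F1b. }
      apply F1c. rewrite Hu. apply Refl. rewrite Hr. apply Refl.
  - apply Refl.
  - exists s. split. exact Hs.
    rewrite <- Hyr. apply R. apply HSmax; exact Hs.
    apply Trans with z. exact Hyz. rewrite <- Hzr. apply F1b.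
Qed.
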